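(* Consider Method 2.1 (described in the context) for minimizing the discrete maximum function $f$ on $D$. Suppose the method does not terminate and the numbers $\varepsilon_k$ are chosen with $\varepsilon_k>0$ for all $k\in K$ and $\varepsilon_k\to0$. Then the sequences $\{x_k\},\{\sigma_k\}$ are defined for all $k\in K$ and $\lim_{k\to\infty}f(x_k)=f^*$, $\lim_{k\to\infty}\sigma_k=f^*$.
   Context: Setting: $D\subset\mathbb{R}^n$ closed convex; $f_j$, $j\in J=\{1,\dots,m\}$, convex on $\mathbb{R}^n$; $f(x)=\max_{j\in J}f_j(x)$; $f^*=\min_Df$ is attained; $X^*=\{x\in D:f(x)=f^*\}$; $K=\{0,1,\dots\}$; $\partial f_j(x)$ is the subdifferential. Method 2.1: fix $x^*\in X^*$; choose a closed convex bounded $G_0\subseteq D$ with $x^*\in G_0$, a closed convex $M_0\subset\mathbb{R}^{n+1}$ with $(x^*,f^* )\in M_0$, numbers $\varepsilon_0\ge0$ and $\bar\gamma_0\le f^*$; $i=k=0$. Step 1: let $(y_i,\gamma_i)$ be a solution of $\min\{\gamma:(x,\gamma)\in M_i,\ x\in G_i,\ \gamma\ge\bar\gamma_i\}$; if $f(y_i)=\gamma_i$ stop. Step 2: if $f(y_i)-\gamma_i>\varepsilon_k$, choose closed convex $S_i\subseteq\mathbb{R}^{n+1}$ with $(x^*,f^* )\in S_i$ and set $Q_i=M_i\cap S_i$; otherwise set $i_k=i$, $x_k=y_{i_k}$, $\sigma_k=\gamma_{i_k}$, choose closed convex $Q_i\ni(x^*,f^* )$, choose $\varepsilon_{k+1}\ge0$,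 $k\leftarrow k+1$. Step 3: let $J(y_i)=\{j:f_j(y_i)=f(y_i)\}$ and choose $J_i\subset J$ containing at least one index of $J(y_i)$. Step 4: for $j\in J_i$ choose a nonempty finite $A_i^j\subset\partial f_j(y_i)$; $M_{i+1}=Q_i\cap\{(x,\gamma):f_j(y_i)+\langle a,x-y_i\rangle\le\gamma\ \forall j\in J_i,\ a\in A_i^j\}$. Step 5: choose closed convex $G_{i+1}\subseteq G_0$ with $x^*\in G_{i+1}$ and a number $\bar\gamma_{i+1}$ with $\bar\gamma_0\le\bar\gamma_{i+1}\le f^*$; $i\leftarrow i+1$; go to Step 1. *)

(* Defs.v *)
From mathcomp Require Import all_boot all_order all_algebra.
From mathcomp Require Import all_classical all_reals all_analysis.
Import numFieldNormedType.Exports.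
Set Implicit Arguments. Unset Strict Implicit. Unset Printing Implicit Defensive.
Import Order.TTheory GRing.Theory Num.Theory.
Local Open Scope classical_set_scope.
Local Open Scope ring_scope.

Definition dotv (R : realType) (n : nat) (a x : 'rV[R]_n) : R :=
  \sum_(i < n) a 0 i * x 0 i.

Definition subdiff (R : realType) (n : nat) (g : 'rV[R]_n -> R) (y : 'rV[R]_n)
  : set 'rV[R]_n :=
  [set a | forall x, g y + dotv a (x - y) <= g x].

Definition fmax (R : realType) (n m : nat) (fs : 'I_m.+1 -> 'rV[R]_n -> R)
  (x : 'rV[R]_n) : R :=
  \big[Num.max/fs ord0 x]_(j < m.+1) fs j x.

Definition cut_set (R : realType) (n m : nat) (fs : 'I_m.+1 -> 'rV[R]_n -> R)
  (y : 'rV[R]_n) (Jy : {set 'I_m.+1}) (A : 'I_m.+1 -> seq 'rV[R]_n)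
  : set ('rV[R]_n * R) :=
  [set p | forall j, j \in Jy -> forall a, a \in A j ->
           fs j y + dotv a (p.1 - y) <= p.2].

(* Main.v *)
Require Import Defs.
From mathcomp Require Import all_boot all_order all_algebra.
From mathcomp Require Import all_classical all_reals all_analysis.
From mathcomp Require Import ring lra.
Import numFieldNormedType.Exports.
Import Order.TTheory GRing.Theory Num.Theory.
Local Open Scope classical_set_scope.
Local Open Scope ring_scope.

Lemma fmax_ge {R : realType} {n m} (fs : 'I_m.+1 -> 'rV[R]_n -> R) x j :
  fs j x <= fmax fs x.
Proof.
rewrite /fmax.
have : j \in index_enum 'I_m.+1 by rewrite mem_index_enum.
elim: (index_enum _) => [//|i r IH]; rewrite inE big_cons /=.
case/orP => [/eqP->|/IH h]; first by rewrite le_max lexx.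
by rewrite le_max h orbT.
Qed.

Lemma entry_le {R : realType} {n} (x : 'rV[R]_n) k : `|x 0 k| <= `|x|.
Proof.
have /mapP[j Hj ->] : `|x ord0 k| \in [seq `|x i.1 i.2| | i : 'I_1 * 'I_n].
  by apply/mapP; exists (ord0, k) => //=; rewrite mem_enum.
by rewrite -[leRHS]/(mx_norm x) mx_normrE; apply/bigmax_geP; right => /=; exists j.
Qed.

Lemma dot_bound {R : realType} {n} (a x : 'rV[R]_n) (C : R) :
  (forall k, `|a 0 k| <= C) -> `|dotv a x| <= n%:R * C * `|x|.
Proof.
move=> aC; rewrite /dotv; apply: le_trans (ler_norm_sum _ _ _) _.
apply: le_trans (_ : \sum_(i < n) C * `|x| <= _).
  apply: ler_sum => i _; rewrite normrM; apply: ler_pM => //.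
  exact: entry_le.
by rewrite sumr_const card_ord -mulrA mulr_natl.
Qed.

Lemma dotvB {R : realType} {n} (a x y : 'rV[R]_n) : dotv a (x - y) = dotv a x - dotv a y.
Proof. by rewrite /dotv -sumrB; apply: eq_bigr => i _; rewrite !mxE mulrBr. Qed.

Lemma dotv_delta {R : realType} {n} (a : 'rV[R]_n) k : dotv a (delta_mx 0 k) = a 0 k.
Proof.
rewrite /dotv (bigD1 k) //= mxE !eqxx mulr1 big1 ?addr0 // => i /negbTE ik.
by rewrite mxE ik andbF mulr0.
Qed.

Lemma convex_ineq {R : realType} {n} {g : 'rV[R]_n -> R} :
  convex_function setT g -> forall (t : R) x y, 0 <= t -> t <= 1 ->
  g (t *: x + (1 - t) *: y) <= t * g x + (1 - t) * g y.
Proof.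
move=> cg t x y t0 t1.
have P : Itv.spec (@Itv.num_sem R) (Itv.Real `[0%Z, 1%Z]) t.
  by rewrite /= /Itv.num_sem /= in_itv /= t0 t1 andbT ger0_real.
have := cg (Itv.mk P) x y (in_setT _) (in_setT _).
done.
Qed.

Lemma convex_seg {R : realType} {n} {g : 'rV[R]_n -> R} :
  convex_function setT g -> forall (e : 'rV[R]_n) (C s : R), `|s| <= C ->
  g (s *: e) <= Num.max (g (C *: e)) (g ((- C) *: e)).
Proof.
move=> cg e C s sC.
have C0 : 0 <= C by apply: le_trans sC.
have [C00|Cn0] := eqVneq C 0.
  by move: sC; rewrite C00 normr_le0 => /eqP->; rewrite le_max lexx.
have Cp : 0 < C by rewrite lt_neqAle eq_sym Cn0.
move: sC; rewrite ler_norml => /andP[s1 s2].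
pose t := (s + C) / (2 * C).
have t0 : 0 <= t by rewrite /t divr_ge0 //; lra.
have t1 : t <= 1 by rewrite /t ler_pdivrMr; lra.
have -> : s *: e = t *: (C *: e) + (1 - t) *: ((- C) *: e).
  rewrite !scalerA -scalerDl; congr (_ *: _).
  rewrite /t; field; lra.
apply: le_trans (convex_ineq cg _ _ _ t0 t1) _.
set a := g _; set b := g _.
have ha : a <= Num.max a b by rewrite le_max lexx.
have hb : b <= Num.max a b by rewrite le_max lexx orbT.
set M := Num.max a b.
apply: le_trans (_ : t * M + (1 - t) * M <= _).
  by apply: lerD; apply: ler_wpM2l => //; rewrite subr_ge0.
by rewrite -mulrDl addrC subrK mul1r.
Qed.

Lemma convex_box_ub {R : realType} {n} {g : 'rV[R]_n -> R} :
  convex_function setT g -> forall B : R, exists U : R,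
  forall x : 'rV[R]_n, (forall k, `|x 0 k| <= B) -> g x <= U.
Proof.
move=> cg.
suff H : forall p B, exists U : R, forall x : 'rV[R]_n, (forall k, `|x 0 k| <= B) ->
   (forall k : 'I_n, (p <= k)%N -> x 0 k = 0) -> g x <= U.
  move=> B; have [U HU] := H n B; exists U => x xB; apply: HU => // k.
  by rewrite leqNgt ltn_ord.
elim=> [|p IH] B.
  exists (g 0) => x _ x0; suff -> : x = 0 by [].
  by apply/rowP => k; rewrite mxE x0.
have [pn|np] := ltnP p n; last first.
  have [U HU] := IH B; exists U => x xB xs; apply: HU => // k pk.
  by move: (leq_trans np pk); rewrite leqNgt ltn_ord.
pose pk := Ordinal pn.
have [U1 HU1] := IH (2 * B).
pose e : 'rV[R]_n := delta_mx 0 pk.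
exists ((U1 + Num.max (g ((2 * B) *: e)) (g ((- (2 * B)) *: e))) / 2) => x xB xs.
have B0 : 0 <= B by apply: le_trans (xB pk).
pose x' := x - x 0 pk *: e.
have -> : x = (1/2) *: (2 *: x') + (1 - 1/2) *: ((2 * x 0 pk) *: e).
  by apply/rowP => k; rewrite /x' !mxE; field.
apply: le_trans (convex_ineq cg _ _ _ _ _) _; [lra|lra|].
have ee : forall k, e 0 k = (k == pk)%:R by move=> k; rewrite /e mxE eqxx.
have x'E : forall k, x' 0 k = if k == pk then 0 else x 0 k.
  move=> k; rewrite /x' /e !mxE ?eqxx /=.
  by case: eqVneq => [->|_]; rewrite ?mulr1 ?mulr0 ?subrr ?subr0.
have h1 : g (2 *: x') <= U1.
  apply: HU1 => k; rewrite mxE x'E.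
    case: (k == pk); first by rewrite mulr0 normr0 mulr_ge0.
    by rewrite normrM ger0_norm // ler_pM2l // xB.
  move=> pk'; case: eqVneq => [_|kp] /=; first by rewrite mulr0.
  rewrite xs ?mulr0 //.
  rewrite ltn_neqAle pk' andbT; apply: contra kp => /eqP h.
  by apply/eqP/val_inj => /=; rewrite h.
have h2' : `|2 * x 0 pk| <= 2 * B by rewrite normrM ger0_norm // ler_pM2l // xB.
move: (convex_seg cg e _ _ h2'); set M := Num.max _ _ => hM.
lra.
Qed.

Lemma dotvN {R : realType} {n} (a x : 'rV[R]_n) : dotv a (- x) = - dotv a x.
Proof. by rewrite /dotv -sumrN; apply: eq_bigr => i _; rewrite !mxE mulrN. Qed.

Lemma subgrad_bound {R : realType} {n} {g : 'rV[R]_n -> R} :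
  convex_function setT g -> forall B : R, exists C : R, 0 <= C /\
  forall (y a : 'rV[R]_n), (forall k, `|y 0 k| <= B) -> subdiff g y a ->
  forall k, `|a 0 k| <= C.
Proof.
move=> cg B; have [U HU] := convex_box_ub cg (B + 1).
exists (Num.max 0 (2 * U - 2 * g 0)); split; first by rewrite le_max lexx.
move=> y a yB sa k.
pose e : 'rV[R]_n := delta_mx 0 k.
have entry_e : forall i, `|e 0 i| <= 1.
  by move=> i; rewrite /e mxE; case: (_ && _); rewrite ?normr1 ?normr0.
have h1 : g (y + e) <= U.
  apply: HU => i; rewrite mxE; apply: le_trans (ler_normD _ _) _.
  by apply: lerD => //; exact: yB.
have h2 : g (y - e) <= U.
  apply: HU => i; rewrite mxE; apply: le_trans (ler_normD _ _) _.
  apply: lerD; first exact: yB.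
  by rewrite /e !mxE normrN; case: (_ && _); rewrite ?normr1 ?normr0.
have h3 : g (- y) <= U.
  apply: HU => i; rewrite mxE normrN; apply: le_trans (yB i) _; rewrite lerDl.
  exact: ler01.
have hmid : g 0 <= 1/2 * g y + (1 - 1/2) * g (- y).
  have := convex_ineq cg (1/2) y (- y).
  have -> : (1/2 : R) *: y + (1 - 1/2) *: (- y) = 0.
    rewrite scalerN -scaleNr -scalerDl.
    have -> : 1/2 + - (1 - 1/2) = 0 :> R by field.
    by rewrite scale0r.
  by apply; lra.
have s1 := sa (y + e); have s2 := sa (y - e).
rewrite addrAC subrr add0r in s1.
rewrite addrAC subrr add0r dotvN in s2.
rewrite /e dotv_delta in s1 s2.
have hC : 2 * U - 2 * g 0 <= Num.max 0 (2 * U - 2 * g 0) by rewrite le_max lexx orbT.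
rewrite ler_norml; apply/andP; split; lra.
Qed.

Theorem theorem2p1p3
  (R : realType) (n m : nat)
  (fs : 'I_m.+1 -> 'rV[R]_n -> R)
  (D : set 'rV[R]_n) (xstar : 'rV[R]_n) (fstar : R)
  (G : nat -> set 'rV[R]_n) (M Q S : nat -> set ('rV[R]_n * R))
  (gbar : nat -> R) (y : nat -> 'rV[R]_n) (gam : nat -> R)
  (Js : nat -> {set 'I_m.+1}) (A : nat -> 'I_m.+1 -> seq 'rV[R]_n)
  (kk : nat -> nat) (eps : nat -> R) :
  closed D -> convex_set D ->
  (forall j, convex_function setT (fs j)) ->
  D xstar -> fmax fs xstar = fstar ->
  (forall x, D x -> fstar <= fmax fs x) ->
  closed (G 0) -> convex_set (G 0) -> bounded_set (G 0) -> G 0 `<=` D ->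
  G 0 xstar ->
  closed (M 0) -> convex_set (M 0) -> M 0 (xstar, fstar) ->
  gbar 0 <= fstar ->
  kk 0 = 0%N ->
  (forall i, [/\ M i (y i, gam i), G i (y i) & gbar i <= gam i]) ->
  (forall i x g, M i (x, g) -> G i x -> gbar i <= g -> gam i <= g) ->
  (forall i, fmax fs (y i) <> gam i) ->
  (forall i, eps (kk i) < fmax fs (y i) - gam i ->
     [/\ closed (S i), convex_set (S i), S i (xstar, fstar),
         Q i = M i `&` S i & kk i.+1 = kk i]) ->
  (forall i, fmax fs (y i) - gam i <= eps (kk i) ->
     [/\ closed (Q i), convex_set (Q i), Q i (xstar, fstar)
         & kk i.+1 = (kk i).+1]) ->
  (forall i, exists2 j, j \in Js i & fs j (y i) = fmax fs (y i)) ->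
  (forall i j, j \in Js i ->
     A i j != [::] /\ (forall a, a \in A i j -> subdiff (fs j) (y i) a)) ->
  (forall i, M i.+1 = Q i `&` cut_set fs (y i) (Js i) (A i)) ->
  (forall i, [/\ closed (G i.+1), convex_set (G i.+1), G i.+1 `<=` G 0
               & G i.+1 xstar]) ->
  (forall i, gbar 0 <= gbar i.+1 <= fstar) ->
  (forall k, 0 < eps k) -> eps @ \oo --> 0 ->
  (forall k, exists i, kk i = k /\ fmax fs (y i) - gam i <= eps k) /\
  (forall ik : nat -> nat,
     (forall k, kk (ik k) = k /\ fmax fs (y (ik k)) - gam (ik k) <= eps k) ->
     (fun k => fmax fs (y (ik k))) @ \oo --> fstar /\
     (fun k => gam (ik k)) @ \oo --> fstar).
Proof.
move=> Dcl Dcvx fconv Dxs fxs fmin G0cl G0cvx G0bd G0D G0xs M0cl M0cvx M0xs gb0 kk0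
  step1 step1min nonterm step2a step2b step3 step4 Mnext step5 gbnext epspos epscvg.
have Gsub : forall i, G i `<=` G 0 by case=> [//|i]; case: (step5 i).
have Gxs : forall i, G i xstar by case=> [//|i]; case: (step5 i).
have yG0 : forall i, G 0 (y i) by move=> i; apply: (Gsub i); case: (step1 i).
have fge : forall i, fstar <= fmax fs (y i) by move=> i; apply: fmin; apply: G0D; exact: yG0.
have gbi : forall i, gbar i <= fstar by case=> [//|i]; case/andP: (gbnext i).
have Minv : forall i, M i (xstar, fstar).
  elim=> [//|i IH]; rewrite Mnext; split.
    have [h|h] := boolP (eps (kk i) < fmax fs (y i) - gam i).
      by case: (step2a i h) => _ _ Sx -> _; split.
    by move: h; rewrite -leNgt => h; case: (step2b i h).
  move=> j jJ a aA /=; case: (step4 i j jJ) => _ /(_ a aA) sa.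
  apply: le_trans (sa xstar) _; rewrite -fxs; exact: fmax_ge.
have gamle : forall i, gam i <= fstar.
  by move=> i; apply: (step1min i xstar); [exact: Minv|exact: Gxs|exact: gbi].
pose small i := fmax fs (y i) - gam i <= eps (kk i).
have key : forall i0, exists2 i, (i0 <= i)%N & small i.
  move=> i0; apply: contrapT => H.
  have big : forall i, (i0 <= i)%N -> eps (kk i) < fmax fs (y i) - gam i.
    by move=> i hi; rewrite ltNge; apply/negP => h; apply: H; exists i.
  have kc : forall i, (i0 <= i)%N -> kk i = kk i0.
    elim=> [|i IH]; first by rewrite leqn0 => /eqP->.
    rewrite leq_eqVlt => /orP[/eqP<-//|hi].
    by case: (step2a i (big i hi)) => _ _ _ _ ->; exact: IH.
  have Mdec : forall i, (i0 <= i)%N -> M i.+1 `<=` M i.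
    move=> i hi; rewrite Mnext; case: (step2a i (big i hi)) => _ _ _ -> _.
    by move=> p [[Mp _] _].
  have Mcut : forall l d, (i0 <= l)%N ->
      M (l.+1 + d)%N `<=` cut_set fs (y l) (Js l) (A l).
    move=> l; elim=> [|d IH] hl; first by rewrite addn0 Mnext => p [_ h].
    rewrite addnS; apply: subset_trans (Mdec _ _) (IH hl).
    by apply: leq_trans hl _; apply: leq_trans (leqnSn l) (leq_addr d _).
  have hja : forall l, exists ja : 'I_m.+1 * 'rV[R]_n,
      [/\ ja.1 \in Js l, fs ja.1 (y l) = fmax fs (y l) & ja.2 \in A l ja.1].
    move=> l; have [j jJ fj] := step3 l.
    case: (step4 l j jJ); case E: (A l j) => [|a s] hne _.
      by exfalso; move/eqP: hne; apply.
    by exists (j, a); split => //=; rewrite E mem_head.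
  have [ja Hja] := choice hja.
  have sub : forall l, subdiff (fs (ja l).1) (y l) (ja l).2.
    by move=> l; case: (Hja l) => h1 _ h3; exact: (step4 l _ h1).2 _ h3.
  have [Mb [_ HMb]] := G0bd.
  pose B := Mb + 1.
  have hB : Mb < B by rewrite /B ltrDl.
  have yB : forall i k, `|y i 0 k| <= B.
    move=> i k; apply: le_trans (entry_le _ _) _.
    exact: (HMb B hB _ (yG0 i)).
  have hC : forall j, exists C : R, 0 <= C /\ forall (y0 a : 'rV[R]_n),
      (forall k, `|y0 0 k| <= B) -> subdiff (fs j) y0 a -> forall k, `|a 0 k| <= C.
    by move=> j; exact: subgrad_bound (fconv j) B.
  have [Cf HCf] := choice hC.
  pose C := \sum_j Cf j.
  have C0 : 0 <= C by apply: sumr_ge0 => j _; case: (HCf j).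
  have aC : forall l k, `|(ja l).2 0 k| <= C.
    move=> l k; case: (HCf (ja l).1) => _ /(_ (y l) _ (yB l) (sub l) k) h.
    apply: le_trans h _; rewrite /C (bigD1 (ja l).1) //= lerDl.
    by apply: sumr_ge0 => j _; case: (HCf j).
  pose e0 := eps (kk i0).
  have e0p : 0 < e0 := epspos _.
  pose K := n%:R * C.
  have K0 : 0 <= K by rewrite /K mulr_ge0.
  have ineq : forall l i, (i0 <= l)%N -> (l < i)%N -> e0 < 2 * K * `|y i - y l|.
    move=> l i hl li.
    have hi : (i0 <= i)%N by apply: leq_trans hl (ltnW li).
    have Mi : M i (y i, gam i) by case: (step1 i).
    have := Mcut l (i - l.+1)%N hl; rewrite subnKC // => /(_ _ Mi) hcut.
    case: (Hja l) => hj1 hj2 hj3.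
    have c1 := hcut _ hj1 _ hj3; rewrite /= hj2 in c1.
    have c2 := sub i (y l); case: (Hja i) => _ hi2 _; rewrite hi2 in c2.
    have c3 := fmax_ge fs (y l) (ja i).1.
    have b1 := big i hi; rewrite kc // in b1.
    have d1 := dot_bound (ja i).2 (y l - y i) C (aC i).
    have d2 := dot_bound (ja l).2 (y i - y l) C (aC l).
    rewrite distrC -/K in d1; rewrite -/K in d2.
    have n1 : - dotv (ja i).2 (y l - y i) <= `|dotv (ja i).2 (y l - y i)|.
      by rewrite -normrN; exact: ler_norm.
    have n2 : - dotv (ja l).2 (y i - y l) <= `|dotv (ja l).2 (y i - y l)|.
      by rewrite -normrN; exact: ler_norm.
    rewrite -/e0 in b1.
    lra.
  have cG0 := bounded_closed_compact G0bd G0cl.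
  have [p [_ clp]] : exists p, (G 0 `&` cluster (y @ \oo)) p.
    have PF : ProperFilter (y @ \oo) := fmap_proper_filter y eventually_filter.
    apply: (cG0 (y @ \oo) PF).
    by exists 0%N => // i _; exact: yG0.
  have often : forall N r, 0 < r -> exists2 i, (N <= i)%N & ball p r (y i).
    move=> N r r0.
    have FA : (y @ \oo) (y @` [set i | (N <= i)%N]).
      by exists N => // i hi; exists i.
    have [z [[i hi <-] bz]] := clp _ _ FA (nbhsx_ballx p r r0).
    by exists i.
  pose del := e0 / (2 * K + 1).
  have K1 : 0 < 2 * K + 1 by lra.
  have delp : 0 < del by rewrite divr_gt0.
  have hdel : del * (2 * K + 1) = e0 by rewrite /del divfK // gt_eqF.
  have del2 : 0 < del / 2 by rewrite divr_gt0.
  have [l hl bl] := often i0 _ del2.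
  have [i hi bi] := often l.+1 _ del2.
  have hin := ineq l i hl hi.
  move: bl bi; rewrite -ball_normE /ball_ /= => bl bi.
  have hd : `|y i - y l| <= del.
    apply: le_trans (ler_distD p _ _) _; rewrite distrC; lra.
  have m1 : 2 * K * `|y i - y l| <= 2 * K * del by apply: ler_wpM2l => //; lra.
  lra.
have Pl : forall d i0, small (i0 + d)%N ->
    exists i, [/\ (i0 <= i)%N, kk i = kk i0 & small i].
  elim=> [|d IH] i0 hs; first by rewrite addn0 in hs; exists i0; split.
  have [hs0|hb] := boolP (small i0); first by exists i0; split.
  rewrite /small -ltNge in hb.
  have kS : kk i0.+1 = kk i0 by case: (step2a i0 hb).
  rewrite addnS -addSn in hs.
  have [i [h1 h2 h3]] := IH _ hs; exists i; split => //.
    exact: leq_trans (leqnSn _) h1.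
  by rewrite h2 kS.
have Pl' : forall i0, exists i, [/\ (i0 <= i)%N, kk i = kk i0 & small i].
  by move=> i0; have [i1 h1 s1] := key i0; apply: (Pl (i1 - i0)%N); rewrite subnKC.
have part1 : forall k, exists i, kk i = k /\ small i.
  elim=> [|k [i [ki si]]].
    by have [i [_ k0' si]] := Pl' 0%N; exists i; split; rewrite ?k0' ?kk0.
  have kS : kk i.+1 = k.+1 by case: (step2b i si) => _ _ _ ->; rewrite ki.
  by have [i' [_ k' si']] := Pl' i.+1; exists i'; split; rewrite ?k' ?kS.
split.
  by move=> k; have [i [ki si]] := part1 k; exists i; split => //; rewrite -ki.
move=> ik Hik.
have ee : forall e, 0 < e -> \forall k \near \oo, eps k <= e.
  move=> e e0; move/cvgrPdist_le : epscvg => /(_ e e0).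
  by apply: filterS => k; rewrite sub0r normrN => h; exact: le_trans (ler_norm _) h.
split; apply/cvgrPdist_le => e e0; apply: filterS (ee e e0) => k hk;
  have [h1 h2] := Hik k; have f1 := fge (ik k); have g1 := gamle (ik k);
  rewrite ler_norml; apply/andP; split; lra.
Qed.
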